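(* Let $R$ be a unital ring and let $S\subseteq R$ be a subset with $0,1\in S$ such that $S$ is an inverse monoid under the multiplication of $R$. Then there is a subset $T$ with $S\subseteq T\subseteq R$ such that $T$, under the multiplication of $R$, is a Boolean inverse monoid.
   Context: An inverse monoid is a monoid in which each $s$ has a unique $s^{-1}$ with $s=ss^{-1}s$, $s^{-1}=s^{-1}ss^{-1}$; natural partial order $s\le t$ iff $s=ts^{-1}s$; $a,b$ compatible if $a^{-1}b,ab^{-1}$ are idempotents. A Boolean inverse monoid is an inverse monoid with zero in which every finite compatible subset has a join with respect to $\le$, multiplication distributes over such joins, and the idempotents form a Boolean algebra. *)

(* Defs.v *)
From HB Require Import structures.
From mathcomp Require Import all_boot all_algebra.
Set Implicit Arguments. Unset Strict Implicit. Unset Printing Implicit Defensive.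
Import GRing.Theory.
Local Open Scope ring_scope.

Section InverseMonoids.
Variable R : pzRingType.
Implicit Types (T : R -> Prop) (s t x y e : R).

Definition is_inv T s s' := T s' /\ s = s * s' * s /\ s' = s' * s * s'.

Definition inverse_monoid T :=
  T 1 /\ (forall x y, T x -> T y -> T (x * y)) /\
  (forall s, T s -> exists! s', is_inv T s s').

Definition natle T s t := T s /\ T t /\ exists s', is_inv T s s' /\ s = t * s' * s.

Definition idem T e := T e /\ e * e = e.

Definition compatible T a b :=
  exists a' b', is_inv T a a' /\ is_inv T b b' /\ idem T (a' * b) /\ idem T (a * b').

Definition is_lub_in T (C P : R -> Prop) j :=
  C j /\ (forall x, P x -> natle T x j) /\
  (forall u, C u -> (forall x, P x -> natle T x u) -> natle T j u).

Definition is_glb_in T (C P : R -> Prop) m :=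
  C m /\ (forall x, P x -> natle T m x) /\
  (forall u, C u -> (forall x, P x -> natle T u x) -> natle T u m).

Definition has_zero T := exists z, T z /\ forall x, T x -> z * x = z /\ x * z = z.

Definition finite_compatible T (A : seq R) :=
  (forall x, x \in A -> T x) /\ (forall a b, a \in A -> b \in A -> compatible T a b).

Definition has_compatible_joins T :=
  forall A : seq R, finite_compatible T A -> exists j, is_lub_in T T (fun x => x \in A) j.

Definition mul_distributes_joins T :=
  forall (A : seq R) j c, finite_compatible T A -> is_lub_in T T (fun x => x \in A) j ->
    T c ->
    is_lub_in T T (fun y => exists2 x, x \in A & y = c * x) (c * j) /\
    is_lub_in T T (fun y => exists2 x, x \in A & y = x * c) (j * c).

Definition idempotents_boolean T :=
  exists (meet join : R -> R -> R) (compl : R -> R) (bot top : R),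
    let E := idem T in
    E bot /\ E top /\
    (forall e, E e -> natle T bot e /\ natle T e top) /\
    (forall e f, E e -> E f ->
       is_glb_in T E (fun x => x = e \/ x = f) (meet e f) /\
       is_lub_in T E (fun x => x = e \/ x = f) (join e f)) /\
    (forall e f g, E e -> E f -> E g ->
       meet e (join f g) = join (meet e f) (meet e g)) /\
    (forall e, E e -> E (compl e) /\ meet e (compl e) = bot /\ join e (compl e) = top).

Definition boolean_inverse_monoid T :=
  inverse_monoid T /\ has_zero T /\ has_compatible_joins T /\
  mul_distributes_joins T /\ idempotents_boolean T.

End InverseMonoids.

(* Main.v *)
Require Import Defs.
From mathcomp Require Import all_boot all_algebra.
From Stdlib Require Import ClassicalEpsilon.
Set Implicit Arguments. Unset Strict Implicit. Unset Printing Implicit Defensive.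
Import GRing.Theory.
Local Open Scope ring_scope.

Section Gen.
Context (R : pzRingType).

Lemma mulKid (a e : R) : e * e = e -> a * e * e = a * e.
Proof. by move=> He; rewrite -mulrA He. Qed.

Lemma mulCr (a e f : R) : e * f = f * e -> a * e * f = a * f * e.
Proof. by move=> H; rewrite -!mulrA H. Qed.
End Gen.

Section Main.
Context (R : pzRingType) (S : R -> Prop).
Hypothesis HS : inverse_monoid S.

Lemma S1 : S 1. Proof. by case: HS. Qed.
Lemma Smul x y : S x -> S y -> S (x * y). Proof. by case: HS => _ [H _]; apply: H. Qed.
Lemma Sinv s : S s -> exists s', is_inv S s s'.
Proof. by case: HS => _ [_ H] /H [s' [H1 _]]; exists s'. Qed.
Lemma Suniq s a b : S s -> is_inv S s a -> is_inv S s b -> a = b.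
Proof. case: HS => _ [_ H] /H [s' [_ H2]] Ha Hb. by rewrite -(H2 _ Ha) (H2 _ Hb). Qed.

Lemma Eidem_prod e f : S e -> S f -> e * e = e -> f * f = f -> (e * f) * (e * f) = e * f.
Proof.
move=> Se Sf He Hf.
have Sx := Smul Se Sf.
case: (Sinv Sx) => x' [Sx' [Hx Hx']].
have Sy : S (f * x' * e) by apply: Smul => //; apply: Smul.
have Iy : is_inv S (e * f) (f * x' * e).
  split => //; split.
    have -> : e * f * (f * x' * e) * (e * f) = e * f * x' * (e * f).
      by rewrite !mulrA; repeat first [rewrite (mulKid _ He) | rewrite (mulKid _ Hf)].
    exact: Hx.
  have -> : f * x' * e * (e * f) * (f * x' * e) = f * (x' * (e * f) * x') * e.
    by rewrite !mulrA; repeat first [rewrite (mulKid _ He) | rewrite (mulKid _ Hf)].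
  by rewrite -Hx'.
have E1 : x' = f * x' * e by apply: (Suniq Sx).
have Ix' : x' * x' = x'.
  rewrite E1 {1}(_ : f * x' * e * (f * x' * e) = f * (x' * (e * f) * x') * e); last by rewrite !mulrA.
  by rewrite -Hx'.
have I1 : is_inv S x' x'.
  by split => //; rewrite Ix' Ix'.
have I2 : is_inv S x' (e * f) by [].
by rewrite -(Suniq Sx' I1 I2).
Qed.

Lemma E_comm e f : S e -> S f -> e * e = e -> f * f = f -> e * f = f * e.
Proof.
move=> Se Sf He Hf.
have Hef := Eidem_prod Se Sf He Hf.
have Hfe := Eidem_prod Sf Se Hf He.
have Sef := Smul Se Sf.
have I1 : is_inv S (e * f) (e * f).
  by split => //; rewrite Hef Hef.
have I2 : is_inv S (e * f) (f * e).
  split; first exact: Smul.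
  have -> : e * f * (f * e) * (e * f) = (e * f) * (e * f).
    by rewrite !mulrA; repeat first [rewrite (mulKid _ He) | rewrite (mulKid _ Hf)].
  have -> : f * e * (e * f) * (f * e) = (f * e) * (f * e).
    by rewrite !mulrA; repeat first [rewrite (mulKid _ He) | rewrite (mulKid _ Hf)].
  by rewrite Hef Hfe.
exact: (Suniq Sef I1 I2).
Qed.

Hypothesis HS0 : S 0.

Inductive Bg : R -> Prop :=
| Bg_E e : S e -> e * e = e -> Bg e
| Bg_mul x y : Bg x -> Bg y -> Bg (x * y)
| Bg_c x : Bg x -> Bg (1 - x).

Lemma Bg_comm_E x e : Bg x -> S e -> e * e = e -> x * e = e * x.
Proof.
move=> Bx Se He; elim: Bx => {x}.
- by move=> x Sx Hx; apply: E_comm.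
- by move=> x y _ IHx _ IHy; rewrite -mulrA IHy mulrA IHx mulrA.
- by move=> x _ IH; rewrite mulrBl mulrBr mul1r mulr1 IH.
Qed.

Lemma Bg_comm x y : Bg x -> Bg y -> x * y = y * x.
Proof.
move=> Bx By; elim: By => {y}.
- by move=> y Sy Hy; apply: Bg_comm_E.
- by move=> y z _ IHy _ IHz; rewrite mulrA IHy -mulrA IHz mulrA.
- by move=> y _ IH; rewrite mulrBl mulrBr mul1r mulr1 IH.
Qed.

Lemma Bg_idem x : Bg x -> x * x = x.
Proof.
elim => {x}.
- by [].
- move=> x y Bx IHx By IHy.
  by rewrite -mulrA (mulrA y x y) (Bg_comm By Bx) -mulrA IHy mulrA IHx.
- move=> x _ IH. by rewrite mulrBl mul1r mulrBr mulr1 IH subrr subr0.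
Qed.

Lemma Bg1 : Bg 1. Proof. by apply: Bg_E; [exact: S1 | rewrite mulr1]. Qed.
Lemma Bg0 : Bg 0. Proof. by apply: Bg_E; [exact: HS0 | rewrite mulr0]. Qed.

Lemma Bg_join x y : Bg x -> Bg y -> Bg (x + y - x * y).
Proof.
move=> Bx By.
have -> : x + y - x * y = 1 - (1 - x) * (1 - y).
  rewrite mulrBl mul1r mulrBr mulr1 !opprB.
  by rewrite (addrC (x - x*y)) addrA subrKC addrA (addrC y x).
by apply: Bg_c; apply: Bg_mul; apply: Bg_c.
Qed.

Lemma Bg_conj s s' b : S s -> is_inv S s s' -> Bg b -> Bg (s * b * s').
Proof.
move=> Ss [Ss' [H1 H2]] Bb.
have Sd : S (s' * s) by apply: Smul.
have Id : (s' * s) * (s' * s) = s' * s by rewrite mulrA -H2.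
have Sr : S (s * s') by apply: Smul.
have Ir : (s * s') * (s * s') = s * s' by rewrite mulrA -H1.
elim: Bb => {b}.
- move=> e Se He; apply: Bg_E; first by apply: Smul => //; apply: Smul.
  have C := E_comm Sd Se Id He.
  have -> : s * e * s' * (s * e * s') = s * (e * (s' * s)) * e * s' by rewrite !mulrA.
  by rewrite -C !mulrA -H1 -(mulrA s e e) He.
- move=> x y Bx IHx By IHy.
  have C := Bg_comm_E Bx Sd Id.
  have -> : s * (x * y) * s' = (s * x * s') * (s * y * s').
    have -> : s * x * s' * (s * y * s') = s * (x * (s' * s)) * y * s' by rewrite !mulrA.
    by rewrite C !mulrA -H1.
  exact: Bg_mul.
- move=> x Bx IH.
  have -> : s * (1 - x) * s' = (s * s') * (1 - s * x * s').
    by rewrite mulrBr mulr1 mulrBl mulrBr mulr1 !mulrA -H1.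
  apply: Bg_mul; first exact: Bg_E.
  exact: Bg_c.
Qed.

Definition N x y := x * y * x = x /\ y * x * y = y /\
  (forall b, Bg b -> Bg (x * b * y)) /\ (forall b, Bg b -> Bg (y * b * x)).
Definition Tt x := exists y, N x y.
Definition inv x := epsilon (inhabits 0) (fun y => N x y).

Lemma invP x : Tt x -> N x (inv x).
Proof. move=> H; exact: (epsilon_spec (inhabits 0) (fun y => N x y) H). Qed.

Lemma N_sym x y : N x y -> N y x.
Proof. by case=> [H1 [H2 [H3 H4]]]; split => //; split => //; split. Qed.

Lemma N_r x y : N x y -> Bg (x * y).
Proof. by case=> [_ [_ [H _]]]; rewrite -(mulr1 x); apply: H; apply: Bg1. Qed.
Lemma N_d x y : N x y -> Bg (y * x).
Proof. by move/N_sym; apply: N_r. Qed.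

Lemma N_mul x x' y y' : N x x' -> N y y' -> N (x * y) (y' * x').
Proof.
move=> Nx Ny.
have C := Bg_comm (N_r Ny) (N_d Nx).
have C' := Bg_comm (N_r Nx) (N_d Ny).
case: Nx => [Hx1 [Hx2 [Hx3 Hx4]]]; case: Ny => [Hy1 [Hy2 [Hy3 Hy4]]].
split.
  have -> : x * y * (y' * x') * (x * y) = x * ((y * y') * (x' * x)) * y by rewrite !mulrA.
  by rewrite C !mulrA Hx1 -(mulrA x y y') -(mulrA x) Hy1.
split.
  have -> : y' * x' * (x * y) * (y' * x') = y' * ((x' * x) * (y * y')) * x' by rewrite !mulrA.
  by rewrite -C !mulrA Hy2 -(mulrA y' x' x) -(mulrA y') Hx2.
split.
  move=> b Bb; rewrite (_ : x * y * b * (y' * x') = x * (y * b * y') * x'); last by rewrite !mulrA.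
  by apply: Hx3; apply: Hy3.
move=> b Bb; rewrite (_ : y' * x' * b * (x * y) = y' * (x' * b * x) * y); last by rewrite !mulrA.
by apply: Hy4; apply: Hx4.
Qed.

Lemma N_B b : Bg b -> N b b.
Proof.
move=> Bb; have I := Bg_idem Bb.
split; first by rewrite !I.
split; first by rewrite !I.
by split=> c Bc; apply: Bg_mul => //; apply: Bg_mul.
Qed.

Lemma N_S s : S s -> exists s', N s s'.
Proof.
move=> Ss; case: (Sinv Ss) => s' I; exists s'.
have I' : is_inv S s' s by case: I => [A [B C]].
case: (I) => [Ss' [H1 H2]].
split; first by rewrite -H1.
split; first by rewrite -H2.
by split=> b Bb; [apply: (Bg_conj Ss I) | apply: (Bg_conj Ss' I')].
Qed.

Lemma TtN x y : N x y -> Tt x. Proof. by move=> H; exists y. Qed.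
Lemma Tt_mul x y : Tt x -> Tt y -> Tt (x * y).
Proof. by move=> [x' Hx] [y' Hy]; exists (y' * x'); apply: N_mul. Qed.
Lemma Tt_B b : Bg b -> Tt b. Proof. by move=> Bb; exists b; apply: N_B. Qed.
Lemma Tt_inv x : Tt x -> Tt (inv x). Proof. by move=> /invP /N_sym H; exists x. Qed.

Lemma T_idem_B y : Tt y -> y * y = y -> Bg y.
Proof.
move=> /invP Ny Hy.
have Bb := N_r Ny; have Bf := N_d Ny.
have C := Bg_comm Bb Bf.
case: Ny => [H1 [H2 _]].
set y' := inv y in H1 H2 Bb Bf C *.
have yb : y * (y * y') = y * y' by rewrite mulrA Hy.
have yf : y * (y' * y) = y by rewrite mulrA H1.
have bf : (y * y') * (y' * y) = y * y'.
  by rewrite -{1}yb -mulrA C mulrA yf.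
have fb : (y' * y) * (y * y') = y'.
  by rewrite -mulrA (mulrA y y y') Hy mulrA H2.
have Ey' : y' = y * y' by rewrite -fb -C bf.
have -> : y = y' * y by rewrite Ey' H1.
exact: Bf.
Qed.

Lemma N_uniq x x' x'' : N x x' -> Tt x'' -> x * x'' * x = x -> x'' * x * x'' = x'' -> x'' = x'.
Proof.
move=> Nx Tx'' H1 H2.
have Tx := TtN Nx.
have B1 : Bg (x * x'').
  apply: T_idem_B; first exact: Tt_mul.
  by rewrite mulrA H1.
have B2 : Bg (x'' * x).
  apply: T_idem_B; first exact: Tt_mul.
  by rewrite mulrA H2.
have Br := N_r Nx; have Bd := N_d Nx.
case: Nx => [Hx1 [Hx2 _]].
have E1 : x'' = x' * x * x''.
  have E : x'' * x * (x' * x) * x'' = x'' * (x * x' * x) * x'' by rewrite !mulrA.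
  rewrite Hx1 H2 (Bg_comm B2 Bd) !mulrA in E.
  by rewrite -{1}E -!mulrA (mulrA x'' x x'') H2.
have E2 : x' = x' * x * x''.
  have E : x' * (x * x'') * (x * x') = x' * (x * x'' * x) * x' by rewrite !mulrA.
  rewrite H1 Hx2 -mulrA (Bg_comm B1 Br) !mulrA in E.
  by rewrite -{1}E Hx2.
by rewrite E1 -E2.
Qed.

Lemma inv_uniq x y : Tt x -> Tt y -> x * y * x = x -> y * x * y = y -> y = inv x.
Proof. by move=> /invP Nx Ty H1 H2; apply: (N_uniq Nx). Qed.

Lemma inv_mul x y : Tt x -> Tt y -> inv (x * y) = inv y * inv x.
Proof.
move=> Tx Ty; have Nxy := N_mul (invP Tx) (invP Ty).
case: (Nxy) => [H1 [H2 _]].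
symmetry; apply: inv_uniq => //; first exact: Tt_mul.
by apply: Tt_mul; apply: Tt_inv.
Qed.

Lemma inv_B b : Bg b -> inv b = b.
Proof.
move=> Bb; case: (N_B Bb) => [H1 [H2 _]].
by symmetry; apply: inv_uniq => //; apply: Tt_B.
Qed.

Lemma inv_inv x : Tt x -> inv (inv x) = x.
Proof.
move=> Tx; case: (invP Tx) => [H1 [H2 _]].
by symmetry; apply: inv_uniq => //; apply: Tt_inv.
Qed.

Definition d x := inv x * x.
Definition r x := x * inv x.

Lemma Bd x : Tt x -> Bg (d x). Proof. by move/invP/N_d. Qed.
Lemma Br x : Tt x -> Bg (r x). Proof. by move/invP/N_r. Qed.
Lemma x_d x : Tt x -> x * d x = x. Proof. by move/invP => [H _]; rewrite /d mulrA. Qed.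
Lemma r_x x : Tt x -> r x * x = x. Proof. by move/invP => [H _]. Qed.
Lemma i_r x : Tt x -> inv x * r x = inv x. Proof. by move/invP => [_ [H _]]; rewrite /r mulrA. Qed.
Lemma d_i x : Tt x -> d x * inv x = inv x. Proof. by move/invP => [_ [H _]]. Qed.
Lemma NB1 x b : Tt x -> Bg b -> Bg (x * b * inv x). Proof. by move/invP => [_ [_ [H _]]]; apply: H. Qed.
Lemma NB2 x b : Tt x -> Bg b -> Bg (inv x * b * x). Proof. by move/invP => [_ [_ [_ H]]]; apply: H. Qed.

Lemma is_inv_T x x' : Tt x -> is_inv Tt x x' -> x' = inv x.
Proof. by move=> Tx [Tx' [H1 H2]]; apply: inv_uniq. Qed.

Lemma is_inv_inv x : Tt x -> is_inv Tt x (inv x).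
Proof. by move=> Tx; case: (invP Tx) => [H1 [H2 _]]; split; [exact: Tt_inv | split]. Qed.

Lemma IM : inverse_monoid Tt.
Proof.
split; first exact: (Tt_B Bg1).
split; first by move=> x y; apply: Tt_mul.
move=> s Ts; exists (inv s); split; first exact: is_inv_inv.
by move=> s' H; rewrite (is_inv_T Ts H).
Qed.

Lemma HZ : has_zero Tt.
Proof. by exists 0; split; [exact: (Tt_B Bg0) | move=> x _; rewrite mul0r mulr0]. Qed.

Lemma d_mulB u f : Tt u -> Bg f -> d (u * f) = d u * f.
Proof.
move=> Tu Bf; rewrite /d inv_mul ?(inv_B Bf) //; last exact: Tt_B.
rewrite -!mulrA (mulrA (inv u) u f) -/(d u) mulrA (Bg_comm Bf (Bd Tu)).
by rewrite -mulrA Bg_idem.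
Qed.

Lemma natleE x u : natle Tt x u -> x = u * d x.
Proof.
move=> [Tx [Tu [x' [I H]]]]; rewrite (is_inv_T Tx I) in H; by rewrite /d mulrA.
Qed.

Lemma natle_T1 x u : natle Tt x u -> Tt x. Proof. by case. Qed.
Lemma natle_T2 x u : natle Tt x u -> Tt u. Proof. by case=> _ []. Qed.

Lemma natleI x u : Tt x -> Tt u -> x = u * d x -> natle Tt x u.
Proof.
move=> Tx Tu H; split => //; split => //; exists (inv x); split; first exact: is_inv_inv.
by rewrite -mulrA.
Qed.

Lemma natleR x u f : Tt u -> Bg f -> x = u * f -> natle Tt x u.
Proof.
move=> Tu Bf Hx.
have Tx : Tt x by rewrite Hx; apply: Tt_mul => //; apply: Tt_B.
apply: natleI => //.
by rewrite Hx d_mulB // mulrA x_d.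
Qed.

Lemma natleL x u e : Tt u -> Bg e -> x = e * u -> natle Tt x u.
Proof.
move=> Tu Be Hx; apply: (natleR (f := inv u * e * u)) => //; first exact: NB2.
rewrite !mulrA -/(r u) (Bg_comm (Br Tu) Be) -mulrA r_x //.
Qed.

Lemma natle_refl x : Tt x -> natle Tt x x.
Proof. by move=> Tx; apply: natleI => //; rewrite x_d. Qed.

Lemma natle_trans x y z : natle Tt x y -> natle Tt y z -> natle Tt x z.
Proof.
move=> Hxy Hyz.
have Ty := natle_T1 Hyz; have Tz := natle_T2 Hyz; have Tx := natle_T1 Hxy.
apply: (natleR (f := d y * d x)) => //; first by apply: Bg_mul; apply: Bd.
by rewrite mulrA -(natleE Hyz) -(natleE Hxy).
Qed.

Lemma natle_anti x y : natle Tt x y -> natle Tt y x -> x = y.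
Proof.
move=> Hxy Hyx.
have Tx := natle_T1 Hxy; have Ty := natle_T1 Hyx.
have E1 : d x = d y * d x by rewrite {1}(natleE Hxy) d_mulB //; apply: Bd.
have E2 : d y = d x * d y by rewrite {1}(natleE Hyx) d_mulB //; apply: Bd.
have E : d x = d y by rewrite E1 -(Bg_comm (Bd Tx) (Bd Ty)) -E2.
by rewrite {1}(natleE Hxy) E x_d.
Qed.

Lemma mono_l c x j : Tt c -> natle Tt x j -> natle Tt (c * x) (c * j).
Proof.
move=> Tc H; have Tj := natle_T2 H; have Tx := natle_T1 H.
apply: (natleR (f := d x)); [exact: Tt_mul | exact: Bd |].
by rewrite -mulrA -(natleE H).
Qed.

Lemma mono_r c x j : Tt c -> natle Tt x j -> natle Tt (x * c) (j * c).
Proof.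
move=> Tc H; have Tj := natle_T2 H; have Tx := natle_T1 H.
apply: (natleR (f := inv c * d x * c)); [exact: Tt_mul | exact: NB2 (Bd Tx) |].
rewrite {1}(natleE H).
have Be := Bd Tx; move: (d x) Be => e Be.
have -> : j * c * (inv c * e * c) = j * (r c * e) * c by rewrite /r !mulrA.
by rewrite (Bg_comm (Br Tc) Be) (mulrA j e) -(mulrA (j * e)) r_x.
Qed.

Definition cp a c := a * d c = c * d a /\ r c * a = r a * c.

Lemma swapBg a c : Tt a -> Tt c -> Bg (inv a * c) -> inv a * c = inv c * a.
Proof.
move=> Ta Tc Bp.
by rewrite -{1}(inv_B Bp) inv_mul ?inv_inv //; apply: Tt_inv.
Qed.

Lemma swapBg' a c : Tt a -> Tt c -> Bg (a * inv c) -> a * inv c = c * inv a.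
Proof.
move=> Ta Tc Bq.
by rewrite -{1}(inv_B Bq) inv_mul ?inv_inv //; apply: Tt_inv.
Qed.

Lemma compat_half a c : Tt a -> Tt c -> Bg (inv a * c) -> Bg (a * inv c) ->
  a * d c = r c * a /\ r a * c = r c * a.
Proof.
move=> Ta Tc Bp Bq.
have Ep := swapBg Ta Tc Bp; have Eq := swapBg' Ta Tc Bq.
split.
  by rewrite /d mulrA Eq -mulrA Ep mulrA.
have E1 : r a * c = a * ((inv a * c) * (inv a * c)) by rewrite Bg_idem // /r mulrA.
rewrite E1 {2}Ep.
have -> : a * (inv a * c * (inv c * a)) = r a * r c * a by rewrite /r !mulrA.
by rewrite (Bg_comm (Br Ta) (Br Tc)) -mulrA r_x.
Qed.

Lemma compat_cp a c : Tt a -> Tt c -> compatible Tt a c -> cp a c.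
Proof.
move=> Ta Tc [a' [c' [Ia [Ic [[Tp Ip] [Tq Iq]]]]]].
rewrite (is_inv_T Ta Ia) (is_inv_T Tc Ic) in Tp Ip Tq Iq.
have Bp := T_idem_B Tp Ip; have Bq := T_idem_B Tq Iq.
have Bp' : Bg (inv c * a) by rewrite -(swapBg Ta Tc Bp).
have Bq' : Bg (c * inv a) by rewrite -(swapBg' Ta Tc Bq).
have [H1 H2] := compat_half Ta Tc Bp Bq.
have [H3 H4] := compat_half Tc Ta Bp' Bq'.
by split; [rewrite H1 -H2 H3 | rewrite H2].
Qed.

Lemma cp_compat a c : Tt a -> Tt c -> cp a c -> compatible Tt a c.
Proof.
move=> Ta Tc [H1 H2]; exists (inv a), (inv c).
split; first exact: is_inv_inv. split; first exact: is_inv_inv.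
have B1 : Bg (inv a * c).
  have -> : inv a * c = inv a * (r a * c) by rewrite mulrA i_r.
  by rewrite -H2 mulrA; apply: NB2 => //; apply: Br.
have B2 : Bg (a * inv c).
  have -> : a * inv c = (a * d c) * inv c by rewrite -mulrA d_i.
  by rewrite H1; apply: NB1 => //; apply: Bd.
rewrite /idem; split; split; by [apply: Tt_B | apply: Bg_idem].
Qed.

Lemma cp_sym a c : cp a c -> cp c a.
Proof. by case=> H1 H2; split. Qed.

Lemma mz (p q a : R) : p * q = 0 -> a * p * q = 0.
Proof. by move=> H; rewrite -mulrA H mulr0. Qed.

Lemma zlem x b e f z : Bg b -> Bg e -> x * e = x -> f * z = z -> e * f = 0 -> x * b * z = 0.
Proof.
move=> Bb Be H1 H2 H3.
rewrite -H1 -H2 (mulrA (x * e * b)) -(mulrA x e b) (Bg_comm Be Bb) mulrA -(mulrA (x * b)) H3.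
by rewrite mulr0 mul0r.
Qed.

Lemma Bg_orth e f : Bg e -> Bg f -> e * f = 0 -> Bg (e + f).
Proof. by move=> Be Bf H; have := Bg_join Be Bf; rewrite H subr0. Qed.

Lemma ortho x y : Tt x -> Tt y -> d x * d y = 0 -> r x * r y = 0 ->
  Tt (x + y) /\ inv (x + y) = inv x + inv y /\ d (x + y) = d x + d y /\ r (x + y) = r x + r y.
Proof.
move=> Tx Ty Hd Hr.
have Hd' : d y * d x = 0 by rewrite (Bg_comm (Bd Ty) (Bd Tx)).
have Hr' : r y * r x = 0 by rewrite (Bg_comm (Br Ty) (Br Tx)).
have Z1 b : Bg b -> x * b * inv y = 0.
  by move=> Bb; apply: (zlem Bb (Bd Tx) (x_d Tx) (d_i Ty) Hd).
have Z2 b : Bg b -> y * b * inv x = 0.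
  by move=> Bb; apply: (zlem Bb (Bd Ty) (x_d Ty) (d_i Tx) Hd').
have Z3 b : Bg b -> inv x * b * y = 0.
  by move=> Bb; apply: (zlem Bb (Br Tx) (i_r Tx) (r_x Ty) Hr).
have Z4 b : Bg b -> inv y * b * x = 0.
  by move=> Bb; apply: (zlem Bb (Br Ty) (i_r Ty) (r_x Tx) Hr').
have z1 : x * inv y = 0 by rewrite -(mulr1 x); apply: Z1; apply: Bg1.
have z2 : y * inv x = 0 by rewrite -(mulr1 y); apply: Z2; apply: Bg1.
have z3 : inv x * y = 0 by rewrite -(mulr1 (inv x)); apply: Z3; apply: Bg1.
have z4 : inv y * x = 0 by rewrite -(mulr1 (inv y)); apply: Z4; apply: Bg1.
have [Nx1 [Nx2 _]] := invP Tx; have [Ny1 [Ny2 _]] := invP Ty.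
have P1 : (x + y) * (inv x + inv y) = x * inv x + y * inv y.
    by rewrite mulrDl !mulrDr z1 z2 addr0 add0r.
have P2 : (inv x + inv y) * (x + y) = inv x * x + inv y * y.
    by rewrite mulrDl !mulrDr z3 z4 addr0 add0r.
have Nxy : N (x + y) (inv x + inv y).
  split.
    rewrite P1 mulrDl !mulrDr (mz _ z3) (mz _ z4).
    by rewrite Nx1 Ny1 addr0 add0r.
  split.
    rewrite P2 mulrDl !mulrDr (mz _ z1) (mz _ z2).
    by rewrite Nx2 Ny2 addr0 add0r.
  split=> b Bb.
    rewrite !mulrDl !mulrDr Z1 // Z2 // addr0 add0r.
    apply: Bg_orth; try exact: NB1.
    by rewrite !mulrA (mz _ z3) !mul0r.
  rewrite !mulrDl !mulrDr Z3 // Z4 // addr0 add0r.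
  apply: Bg_orth; try exact: NB2.
  by rewrite !mulrA (mz _ z1) !mul0r.
have Tj : Tt (x + y) by exists (inv x + inv y).
have Ei : inv (x + y) = inv x + inv y.
  case: (Nxy) => [H1 [H2 _]].
  symmetry; apply: inv_uniq => //.
  by exists (x + y); apply: N_sym.
by split => //; split => //; rewrite /d /r Ei.
Qed.

Definition jn a w := a + w * (1 - d a).

Lemma idemC e : Bg e -> e * (1 - e) = 0.
Proof. by move=> Be; rewrite mulrBr mulr1 Bg_idem // subrr. Qed.
Lemma idemC' e : Bg e -> (1 - e) * e = 0.
Proof. by move=> Be; rewrite mulrBl mul1r Bg_idem // subrr. Qed.

Lemma Bg_ghk g h e : Bg g -> Bg h -> Bg e -> g * e = g -> Bg (g + h * (1 - e)).
Proof.
move=> Bg_ Bh Be H; apply: Bg_orth => //; first by apply: Bg_mul => //; apply: Bg_c.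
by rewrite mulrA (Bg_comm Bg_ Bh) -mulrA -{1}H -mulrA idemC // !mulr0.
Qed.

Lemma jn_props a w : Tt a -> Tt w -> cp a w ->
  Tt (jn a w) /\ d (jn a w) = d a + d w * (1 - d a) /\
  r (jn a w) = r a + w * (1 - d a) * inv w.
Proof.
move=> Ta Tw [H1 H2].
have Bda := Bd Ta; have Bdw := Bd Tw.
have Bc : Bg (1 - d a) by apply: Bg_c.
have Ty : Tt (w * (1 - d a)) by apply: Tt_mul => //; apply: Tt_B.
have iy : inv (w * (1 - d a)) = (1 - d a) * inv w by rewrite inv_mul ?(inv_B Bc) //; apply: Tt_B.
have dy : d (w * (1 - d a)) = d w * (1 - d a) by rewrite d_mulB.
have ry : r (w * (1 - d a)) = w * (1 - d a) * inv w.
  by rewrite /r iy mulrA -(mulrA w) Bg_idem.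
have L1 : d a * d (w * (1 - d a)) = 0.
  rewrite dy; move: (d a) (d w) Bda Bdw => e f Be Bf.
  by rewrite mulrA (Bg_comm Be Bf) -mulrA idemC // mulr0.
have L2 : r a * r (w * (1 - d a)) = 0.
  rewrite ry !mulrA -H2 -(mulrA (r w) a) mulrBr mulr1 x_d // subrr mulr0 mul0r.
  done.
have [Tj [_ [Ed Er]]] := ortho Ta Ty L1 L2.
by split => //; split; [rewrite /jn Ed dy | rewrite /jn Er ry].
Qed.

Lemma J2a a w : Tt a -> Tt w -> cp a w -> natle Tt a (jn a w).
Proof.
move=> Ta Tw C; have [Tj _] := jn_props Ta Tw C.
apply: (natleR (f := d a)) => //; first exact: Bd.
rewrite /jn mulrDl x_d // -mulrA idemC' ?mulr0 ?addr0 //; exact: Bd.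
Qed.

Lemma J2b a w : Tt a -> Tt w -> cp a w -> natle Tt w (jn a w).
Proof.
move=> Ta Tw [H1 H2]; have [Tj _] := jn_props Ta Tw (conj H1 H2).
apply: (natleR (f := d w)) => //; first exact: Bd.
rewrite /jn mulrDl H1.
have Hw := x_d Tw; have Bda := Bd Ta; have Bdw := Bd Tw.
move: (d a) (d w) Bda Bdw Hw => e f Be Bf Hw.
rewrite -mulrA mulrBl mul1r mulrBr Hw (Bg_comm Be Bf) mulrA Hw.
by rewrite addrC subrK.
Qed.

Lemma J3 a w u : Tt a -> Tt w -> cp a w -> natle Tt a u -> natle Tt w u -> natle Tt (jn a w) u.
Proof.
move=> Ta Tw [H1 H2] Hau Hwu.
have Tu := natle_T2 Hau.
have Ea := natleE Hau; have Ew := natleE Hwu.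
apply: (natleR (f := d a + d w - d a * d w)) => //; first by apply: Bg_join; apply: Bd.
rewrite mulrBr mulrDr mulrA -Ea -Ew H1 /jn mulrBr mulr1.
by rewrite addrA.
Qed.

Lemma J4 a w z : Tt a -> Tt w -> Tt z -> cp a w -> cp z a -> cp z w -> cp z (jn a w).
Proof.
move=> Ta Tw Tz C [Ha1 Ha2] [Hw1 Hw2].
have [Tj [Ed Er]] := jn_props Ta Tw C.
split.
  rewrite Ed /jn mulrDr mulrDl Ha1; congr (_ + _).
  rewrite mulrA Hw1 -(mulrA w) -(mulrA w (1 - d a)); congr (w * _); apply: Bg_comm; first exact: Bd.
  by apply: Bg_c; apply: Bd.
rewrite Er /jn mulrDl Ha2 (mulrDr (r z)); congr (_ + _).
have E1 : w * (1 - d a) * inv w * z = r w * z - w * d a * inv w * z.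
  by rewrite mulrBr mulr1 !mulrBl.
rewrite E1 Hw2.
have [_ [Hi _]] := invP Tw.
have E2 : w * d a * inv w * z = r z * (w * d a * inv w) * w.
  have -> : w * d a * inv w * z = (w * d a * inv w) * (r w * z).
    rewrite /r (mulrA _ (w * inv w)) (mulrA _ w) -(mulrA (w * d a) (inv w) w).
    by rewrite -(mulrA (w * d a) (inv w * w)) Hi.
  by rewrite Hw2 mulrA (Bg_comm (NB1 Tw (Bd Ta)) (Br Tz)) mulrA.
have E3 : w * d a * inv w * w = w * d a.
  rewrite -(mulrA (w * d a)) -/(d w) -mulrA (Bg_comm (Bd Ta) (Bd Tw)) mulrA x_d //.
rewrite E2 -(mulrA (r z)) E3 mulrBr mulr1 (mulrBr (r z)).
done.
Qed.

Lemma xix x X : Tt x -> X * x * inv x * x = X * x.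
Proof.
by case/invP => H _; rewrite -(mulrA (X * x)) -(mulrA X x (inv x * x)) (mulrA x (inv x) x) H.
Qed.

Lemma J5 a w c u : Tt a -> Tt w -> Tt c -> cp a w ->
  natle Tt (c * a) u -> natle Tt (c * w) u -> natle Tt (c * jn a w) u.
Proof.
move=> Ta Tw Tc C Ha Hw.
have Tu := natle_T2 Ha.
have Ea := natleE Ha; have Ew := natleE Hw.
have Bg_ := Bd (Tt_mul Tc Ta); have Bh := Bd (Tt_mul Tc Tw); have Be := Bd Ta.
have Hg : d (c * a) * d a = d (c * a).
  by rewrite /d inv_mul // !mulrA xix.
apply: (natleR (f := d (c * a) + d (c * w) * (1 - d a))) => //; first exact: Bg_ghk.
rewrite /jn mulrDr {1}Ea (mulrA c w) {1}Ew.
by rewrite (mulrDr u) (mulrA u).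
Qed.

Lemma J6 a w c u : Tt a -> Tt w -> Tt c -> cp a w ->
  natle Tt (a * c) u -> natle Tt (w * c) u -> natle Tt (jn a w * c) u.
Proof.
move=> Ta Tw Tc C Ha Hw.
have Tu := natle_T2 Ha.
have Eg : d (a * c) = inv c * d a * c by rewrite /d inv_mul // !mulrA.
have Ea : a * c = u * (inv c * d a * c) by rewrite -Eg; apply: natleE.
have Ew := natleE Hw.
have Edc : d a * c = c * (inv c * d a * c).
  have Be := Bd Ta; have Hr := r_x Tc; have Brc := Br Tc.
  rewrite (mulrA c (inv c * d a)) (mulrA c (inv c)) -/(r c).
  move: (d a) (r c) Be Hr Brc => e rc Be Hr Brc.
  by rewrite (Bg_comm Brc Be) -mulrA Hr.
have Bg_ : Bg (inv c * d a * c) by apply: NB2 => //; apply: Bd.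
have Bh := Bd (Tt_mul Tw Tc).
apply: (natleR (f := inv c * d a * c + d (w * c) - inv c * d a * c * d (w * c))) => //.
  exact: Bg_join.
rewrite /jn mulrDl {1}Ea -(mulrA w) mulrBl mul1r mulrBr Edc (mulrA w c) {1 2}Ew.
move: (inv c * d a * c) (d (w * c)) Bg_ Bh => g h Bg_ Bh.
rewrite mulrBr mulrDr -(mulrA u h g) (Bg_comm Bh Bg_) !mulrA.
by rewrite addrA.
Qed.

Lemma natle0 u : Tt u -> natle Tt 0 u.
Proof. by move=> Tu; apply: (natleR (f := 0)) => //; [exact: Bg0 | rewrite mulr0]. Qed.

Lemma joins (A : seq R) : (forall x, x \in A -> Tt x) ->
  (forall x y, x \in A -> y \in A -> cp x y) ->
  exists j, Tt j /\ (forall x, x \in A -> natle Tt x j) /\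
  (forall u, Tt u -> (forall x, x \in A -> natle Tt x u) -> natle Tt j u) /\
  (forall z, Tt z -> (forall x, x \in A -> cp z x) -> cp z j) /\
  (forall c u, Tt c -> Tt u -> (forall x, x \in A -> natle Tt (c * x) u) -> natle Tt (c * j) u) /\
  (forall c u, Tt c -> Tt u -> (forall x, x \in A -> natle Tt (x * c) u) -> natle Tt (j * c) u).
Proof.
elim: A => [|a A IH] HT HC.
  exists 0; split; first exact: (Tt_B Bg0).
  split; first by [].
  split; first by move=> u Tu _; apply: natle0.
  split; first by move=> z Tz _; rewrite /cp /d /r !mulr0 !mul0r.
  split; first by move=> c u _ Tu _; rewrite mulr0; apply: natle0.
  by move=> c u _ Tu _; rewrite mul0r; apply: natle0.
have HT' : forall x, x \in A -> Tt x by move=> x Hx; apply: HT; rewrite in_cons Hx orbT.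
have HC' : forall x y, x \in A -> y \in A -> cp x y.
  by move=> x y Hx Hy; apply: HC; rewrite in_cons ?Hx ?Hy orbT.
have Ta : Tt a := HT a (mem_head a A).
have [w [Tw [H2 [H3 [H4 [H5 H6]]]]]] := IH HT' HC'.
have Caw : cp a w.
  by apply: H4 => // x Hx; apply: HC; rewrite ?mem_head // in_cons Hx orbT.
have [Tj _] := jn_props Ta Tw Caw.
exists (jn a w); split => //.
split.
  move=> x; rewrite in_cons => /orP [/eqP -> | Hx]; first exact: J2a.
  exact: natle_trans (H2 x Hx) (J2b Ta Tw Caw).
split.
  move=> u Tu Hu; apply: J3 => //; first by apply: Hu; rewrite mem_head.
  by apply: H3 => // x Hx; apply: Hu; rewrite in_cons Hx orbT.
split.
  move=> z Tz Hz; apply: J4 => //; first by apply: Hz; rewrite mem_head.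
  by apply: H4 => // x Hx; apply: Hz; rewrite in_cons Hx orbT.
split.
  move=> c u Tc Tu Hu; apply: J5 => //; first by apply: Hu; rewrite mem_head.
  by apply: H5 => // x Hx; apply: Hu; rewrite in_cons Hx orbT.
move=> c u Tc Tu Hu; apply: J6 => //; first by apply: Hu; rewrite mem_head.
by apply: H6 => // x Hx; apply: Hu; rewrite in_cons Hx orbT.
Qed.

Lemma joinsA (A : seq R) : finite_compatible Tt A ->
  exists j, Tt j /\ (forall x, x \in A -> natle Tt x j) /\
  (forall u, Tt u -> (forall x, x \in A -> natle Tt x u) -> natle Tt j u) /\
  (forall z, Tt z -> (forall x, x \in A -> cp z x) -> cp z j) /\
  (forall c u, Tt c -> Tt u -> (forall x, x \in A -> natle Tt (c * x) u) -> natle Tt (c * j) u) /\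
  (forall c u, Tt c -> Tt u -> (forall x, x \in A -> natle Tt (x * c) u) -> natle Tt (j * c) u).
Proof.
move=> [HT HC]; apply: joins => // x y Hx Hy.
by apply: compat_cp; [apply: HT | apply: HT | apply: HC].
Qed.

Lemma CJ : has_compatible_joins Tt.
Proof.
move=> A HA; have [j [Tj [H2 [H3 _]]]] := joinsA HA.
by exists j; split => //; split.
Qed.

Lemma MD : mul_distributes_joins Tt.
Proof.
move=> A j c HA [Tj [Hub Hlub]] Tc.
have [j0 [Tj0 [H2 [H3 [_ [H5 H6]]]]]] := joinsA HA.
have E : j = j0 by apply: natle_anti; [apply: Hlub | apply: H3].
subst j0.
split.
  split; first exact: Tt_mul.
  split; first by move=> y [x Hx ->]; apply: mono_l => //; apply: Hub.
  move=> u Tu Hu; apply: H5 => // x Hx; apply: Hu; by exists x.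
split; first exact: Tt_mul.
split; first by move=> y [x Hx ->]; apply: mono_r => //; apply: Hub.
move=> u Tu Hu; apply: H6 => // x Hx; apply: Hu; by exists x.
Qed.

Lemma idemB e : idem Tt e <-> Bg e.
Proof.
split; first by case=> H1 H2; apply: T_idem_B.
by move=> Be; split; [apply: Tt_B | apply: Bg_idem].
Qed.

Lemma natleB e f : Bg e -> Bg f -> e = f * e -> natle Tt e f.
Proof. by move=> Be Bf H; apply: (natleR (f := e)) => //; apply: Tt_B. Qed.

Lemma natleBE e f : Bg e -> natle Tt e f -> e = f * e.
Proof.
move=> Be H; have := natleE H.
by rewrite /d (inv_B Be) Bg_idem.
Qed.

Lemma IB : idempotents_boolean Tt.
Proof.
exists (fun e f => e * f), (fun e f => e + f - e * f), (fun e => 1 - e), 0, 1.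
rewrite /=.
split; first by apply/idemB; apply: Bg0.
split; first by apply/idemB; apply: Bg1.
split.
  move=> e /idemB Be; split; apply: natleB => //; try exact: Bg0; try exact: Bg1.
    by rewrite mulr0.
  by rewrite mul1r.
split.
  move=> e f /idemB Be /idemB Bf.
  have C := Bg_comm Be Bf.
  have Ie := Bg_idem Be; have If := Bg_idem Bf.
  split.
    split; first by apply/idemB; apply: Bg_mul.
    split.
      move=> x [->|->]; apply: natleB => //; try exact: Bg_mul.
        by rewrite mulrA Ie.
      by rewrite C mulrA If.
    move=> u /idemB Bu Hu.
    have Eu := natleBE Bu (Hu e (or_introl erefl)).
    have Fu := natleBE Bu (Hu f (or_intror erefl)).
    apply: natleB => //; first exact: Bg_mul.
    by rewrite -mulrA -Fu.
  split; first by apply/idemB; apply: Bg_join.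
  split.
    move=> x [->|->]; apply: natleB => //; try exact: Bg_join.
      by rewrite mulrBl mulrDl Ie -(mulrA e f e) -C mulrA Ie addrK.
    by rewrite mulrBl mulrDl If -mulrA If (addrC (e * f) f) addrK.
  move=> u /idemB Bu Hu.
  have Eu := natleBE Be (Hu e (or_introl erefl)).
  have Fu := natleBE Bf (Hu f (or_intror erefl)).
  apply: natleB => //; first exact: Bg_join.
  by rewrite mulrBr mulrDr mulrA -Eu -Fu.
split.
  move=> e f g /idemB Be /idemB Bf /idemB Bg_.
  rewrite mulrBr mulrDr; congr (_ + _ - _).
  rewrite (mulrA (e * f) e g) -(mulrA e f e) -(Bg_comm Be Bf) (mulrA e e f) (Bg_idem Be).
  by rewrite mulrA.
move=> e /idemB Be.
split; first by apply/idemB; apply: Bg_c.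
split; first exact: idemC.
by rewrite idemC // subr0 addrC subrK.
Qed.

End Main.

Unset Implicit Arguments.
Set Strict Implicit.

Theorem mainTheorem9 (R : pzRingType) (S : R -> Prop) :
  S 0 -> S 1 -> inverse_monoid S ->
  exists T : R -> Prop, (forall x, S x -> T x) /\ boolean_inverse_monoid T.
Proof.
move=> HS0 HS1 HS.
exists (@Tt R S); split.
  by move=> x Sx; case: (N_S HS Sx) => y Hy; exists y.
split; first exact: (IM HS).
split; first exact: (HZ HS HS0).
split; first exact: (@CJ _ _ HS HS0).
split; first exact: (@MD _ _ HS HS0).
exact: (IB HS HS0).
Qed.
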